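(* Consider the random directed graph $\mathcal{G}_{n,1/2}$ on $n$ vertices (each ordered pair of distinct vertices is an edge independently with probability $\frac12$, so all such directed graphs are equally likely), with an arbitrary partition $(V_1,V_P)$ of the vertices into player-1 and probabilistic vertices and an arbitrary nonempty target (B\''uchi) set $B$. For all sufficiently large $n$, the probability that the classical algorithm for almost-sure winning in MDPs with B\''uchi objective $B$ takes more than one iteration is less than $\left(\frac34\right)^n$.
   Context: For $U \subseteq V$ in a graph $G$ with vertex partition $(V_1,V_P)$, the random attractor $\mathrm{Attr}_P(U)$ is $\bigcup_{i\ge 0} X_i$, where $X_0=U$ and $X_{i+1}= X_i \cup \{v\in V_P : E(v)\cap X_i \neq\emptyset\} \cup \{v \in V_1 : E(v)\subseteq X_i\}$, with $E(v)$ the set of out-neighbours of $v$. The classical algorithm for B\''uchi objective $B$ works in iterations: starting from $G^1=G$ with vertex set $V^1$, in iteration $i$ it computes the set $Z^i$ of vertices of $G^i$ with a directed path in $G^i$ to a vertex of $B\cap V^i$, sets $U^i=V^i\setminus Z^i$; if $U^i=\emptyset$ it stops and outputs $Z^i$, otherwise it removes $\mathrm{Attr}_P(U^i)$ (computed in $G^i$) from $G^i$ to get $G^{i+1}$ and continues. *)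

(* Defs.v *)
From mathcomp Require Import all_boot all_order all_algebra.
Set Implicit Arguments. Unset Strict Implicit. Unset Printing Implicit Defensive.
Import GRing.Theory Num.Theory.

Section Buchi.
Variable T : finType.
Variable E : rel T.
(* player-1 vertices; probabilistic vertices are the complement ~: V1 *)
Variable V1 : {set T}.
Variable B : {set T}.

Definition sub_edge (W : {set T}) : rel T :=
  fun x y => [&& x \in W, y \in W & E x y].

Definition out_nb (W : {set T}) (v : T) : {set T} :=
  [set u in W | E v u].

Definition reachB (W : {set T}) : {set T} :=
  [set v in W | [exists b in B :&: W, connect (sub_edge W) v b]].

Definition attr_step (W : {set T}) (X : {set T}) : {set T} :=
  X :|: [set v in W :&: ~: V1 | out_nb W v :&: X != set0]
    :|: [set v in W :&: V1 | out_nb W v \subset X].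

(* Attr_P(U) in G[W]: union of the increasing chain X_0 = U, X_{i+1} = step X_i;
   the chain stabilises after at most #|T| steps *)
Definition attrP (W U : {set T}) : {set T} := iter #|T| (attr_step W) U.

Fixpoint buchi_iters (k : nat) (W : {set T}) : nat :=
  match k with
  | 0 => 0
  | k'.+1 =>
      let Z := reachB W in
      let U := W :\: Z in
      if U == set0 then 1 else (buchi_iters k' (W :\: attrP W U)).+1
  end.

(* each non-final iteration removes a nonempty set, so #|T|.+1 iterations
   always suffice: this is the total iteration count of the algorithm on G *)
Definition buchi_iterations : nat := buchi_iters #|T|.+1 [set: T].

End Buchi.

(* the sample space of G_{n,1/2}: all loopless directed graphs on 'I_n,
   represented by their edge sets; all equally likely *)
Definition digraphs (n : nat) : {set {set 'I_n * 'I_n}} :=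
  [set E : {set 'I_n * 'I_n} | [forall v : 'I_n, (v, v) \notin E]].

Definition edge_rel n (E : {set 'I_n * 'I_n}) : rel 'I_n :=
  fun x y => (x, y) \in E.

Definition prob_multi_iter (n : nat) (V1 B : {set 'I_n}) : rat :=
  (#|[set E in digraphs n | (1 < buchi_iterations (edge_rel E) V1 B)%N]|%:R
    / #|digraphs n|%:R)%R.

(* Main.v *)
Require Import Defs.
From mathcomp Require Import all_boot.
From mathcomp Require Import zify.


Lemma asym1 j : 120 <= j -> 8*(2*j+1)^2*8^j < 9^j.
Proof.
move=> Hj; rewrite -(subnKC Hj); elim: (j - 120) => [|i IH]; first by lia.
have H1 : (2*(120+i.+1)+1)^2 * 8 <= 9 * (2*(120+i)+1)^2 by nia.
set A := 8 ^ (120 + i) in IH *; set C := 9 ^ (120 + i) in IH *.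
rewrite addnS (expnSr 8) (expnSr 9) -/A -/C.
nia.
Qed.

Lemma asym2 n : 241 <= n -> n.+1 * n * 4^n < 3^n * 2^(n./2) /\ n <= 2^(n./2).
Proof.
move=> Hn.
set j := n./2.
have Hnj : n = j.*2 + odd n by rewrite /j -[in LHS](odd_double_half n) addnC.
have Hj : 120 <= j by lia.
have Ho : odd n <= 1 by case: (odd n).
have H1 := asym1 j Hj.
have H4 : 4^n <= 4 * (8^j * 2^j).
  rewrite -expnMn (_ : 8 * 2 = 4^2) // -expnM.
  rewrite -expnS leq_exp2l //; lia.
have H3 : 9^j <= 3^n.
  rewrite (_ : 9 = 3^2) // -expnM leq_exp2l //; lia.
have Hp : n.+1 * n <= 2*(2*j+1)^2 by nia.
set A := 8^j in H1 H4 *; set B := 2^j in H4 *; set C := 9^j in H1 H3 *.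
set X := 4^n in H4 *; set Y := 3^n in H3 *.
have HB : 0 < B by rewrite expn_gt0.
have HXY : Y <= X by rewrite /X /Y leq_exp2r //; lia.
have HY : 0 < Y by rewrite /Y expn_gt0.
have Hm : n.+1 * n * X < Y * B by nia.
split; first by [].
have : n * Y < Y * B by nia.
nia.
Qed.


Lemma ffact_le_exp m n : n ^_ m <= n ^ m.
Proof.
elim: m n => [|m IH] [|n] //.
rewrite ffactSS expnS leq_mul //.
apply: leq_trans (IH n) _.
elim: m {IH} => [|m IHm] //; rewrite !expnS leq_mul //.
Qed.

Lemma bin_le_exp n m : 'C(n, m) <= n ^ m.
Proof.
apply: leq_trans (ffact_le_exp m n); by rewrite -bin_ffact leq_pmulr ?fact_gt0.
Qed.

Lemma expl_mono a b e : a <= b -> a ^ e <= b ^ e.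
Proof. move=> H; elim: e => [|e IH] //; rewrite !expnS leq_mul //. Qed.

Lemma term_bound n m h : 0 < m -> h <= n - m -> n <= 2 ^ h ->
  'C(n, m) * 2 ^ h <= n * 2 ^ (m * (n - m)).
Proof.
case: m => // p _ Hh Hn.
apply: leq_trans (leq_mul (bin_le_exp n p.+1) (leqnn _)) _.
rewrite expnS -mulnA leq_mul //.
have -> : 2 ^ (p.+1 * (n - p.+1)) = (2 ^ (n - p.+1)) ^ p * 2 ^ (n - p.+1).
  by rewrite -expnM -expnD; congr (2 ^ _); lia.
apply: leq_mul; last by rewrite leq_exp2l.
apply: leq_trans (_ : (2 ^ h) ^ p <= _); first exact: expl_mono.
by apply: expl_mono; rewrite leq_exp2l.
Qed.

Lemma term_bound2 n k : 0 < k < n -> n <= 2 ^ (n./2) ->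
  'C(n, k) * 2 ^ (n./2) <= n * 2 ^ (k * (n - k)).
Proof.
move=> /andP [Hk0 Hkn] Hn.
have Hh : n./2 * 2 <= n by rewrite muln2 -{2}(odd_double_half n) leq_addl.
case: (leqP k (n - k)) => Hk.
  apply: term_bound => //; lia.
rewrite -(bin_sub (ltnW Hkn)) mulnC.
have -> : k * (n - k) = (n - k) * (n - (n - k)) by rewrite mulnC subKn // ltnW.
rewrite mulnC; apply: term_bound => //; lia.
Qed.

Lemma card_proper n (S : {set 'I_n}) : S != set0 -> S != setT -> 0 < #|S| < n.
Proof.
move=> H0 HT; rewrite card_gt0 H0 /=.
have := @proper_card _ S [set: 'I_n]; rewrite properT HT cardsT card_ord; exact.
Qed.

Lemma sum_bound n d : n <= 2 ^ (n./2) ->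
  (forall k, 0 < k < n -> k * (n - k) <= d) ->
  (\sum_(S : {set 'I_n} | (S != set0) && (S != setT)) 2 ^ (d - #|S| * (n - #|S|)))
    * 2 ^ (n./2) <= n.+1 * n * 2 ^ d.
Proof.
move=> Hn Hd.
rewrite big_distrl /=.
rewrite (partition_big (fun S : {set 'I_n} => (inord #|S| : 'I_n.+1)) xpredT) //=.
apply: leq_trans (_ : \sum_(k : 'I_n.+1) n * 2^d <= _); last first.
  by rewrite sum_nat_const card_ord mulnA.
apply: leq_sum => k _.
have Hin : forall S : {set 'I_n}, (inord #|S| == k :> 'I_n.+1) = (#|S| == k).
  move=> S; rewrite -val_eqE /= inordK //.
  by rewrite ltnS; apply: leq_trans (max_card _) _; rewrite card_ord.
case: (boolP (0 < k < n)) => Hk.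
  apply: leq_trans (_ : \sum_(S : {set 'I_n} | #|S| == k) 2 ^ (d - k * (n - k)) * 2^(n./2) <= _).
    rewrite [X in _ <= X]big_mkcond [X in X <= _]big_mkcond /=; apply: leq_sum => S _.
    rewrite Hin; case: ifP => // /andP [_ /eqP HS].
    by rewrite HS eqxx.
  rewrite sum_nat_const.
  have -> : #|(fun i : {set 'I_n} => #|i| == k)| = 'C(n, k).
    have := card_draws 'I_n k; rewrite card_ord => <-.
    apply: eq_card => S; by rewrite inE.
  have Hb := term_bound2 n k Hk Hn; have Hf := Hd k Hk.
  rewrite -[in X in _ <= _ * 2 ^ X](subnK Hf) expnD.
  set A := 2 ^ (d - _) in Hb *.
  rewrite mulnCA [n * _]mulnCA leq_mul2l Hb orbT //.
rewrite big1 // => S /andP [/andP [H0 HT]]; rewrite Hin => /eqP HS.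
by move: Hk; rewrite -HS card_proper.
Qed.


From mathcomp Require Import all_order all_algebra.
Import GRing.Theory Num.Theory.

Definition Dn n : {set 'I_n * 'I_n} := [set p | p.1 != p.2].

Lemma cardDn n : #|Dn n| = n * n - n.
Proof.
have -> : Dn n = ~: [set (i, i) | i in 'I_n].
  apply/setP => -[x y]; rewrite !inE /=; apply/idP/idP.
    move=> Hxy; apply/imsetP => -[z _ [e1 e2]]; by move: Hxy; rewrite e1 e2 eqxx.
  move=> H; apply/eqP => e; apply: (negP H); apply/imsetP; exists x => //; by rewrite e.
rewrite cardsCs setCK card_imset; last by move=> a b [].
by rewrite card_prod !card_ord.
Qed.

Lemma card_bigcup_le (I T : finType) (P : pred I) (F : I -> {set T}) :
  #|\bigcup_(i | P i) F i| <= \sum_(i | P i) #|F i|.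
Proof.
elim/big_rec2: _ => [|i s A _ H]; first by rewrite cards0.
rewrite cardsU; apply: leq_trans (leq_subr _ _) _; exact: leq_add.
Qed.

Lemma card_powF n (S : {set 'I_n}) :
  #|powerset (Dn n :\: setX S (~: S))| = 2 ^ (#|Dn n| - #|S| * (n - #|S|)).
Proof.
rewrite card_powerset cardsDS ?cardsX.
  by rewrite [#|~: S|]cardsCs setCK card_ord.
apply/subsetP => -[x y]; rewrite !inE /= => /andP [Hx Hy]; apply/eqP => e.
by move: Hy; rewrite -e Hx.
Qed.

Lemma buchi_gt1 (T : finType) (E : rel T) V1 B :
  (1 < buchi_iterations E V1 B)%N -> [set: T] :\: reachB E B [set: T] != set0.
Proof. rewrite /buchi_iterations /=. by case: ifP. Qed.

Lemma reach_closed (T : finType) (E : rel T) B x y :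
  x \in [set: T] :\: reachB E B [set: T] -> E x y ->
  y \in [set: T] :\: reachB E B [set: T].
Proof.
rewrite /reachB !inE /= !andbT => Hx Exy; apply: contraNN Hx => /existsP [b /andP [Hb Hc]].
apply/existsP; exists b; rewrite Hb /=.
apply: connect_trans Hc; apply: connect1; by rewrite /sub_edge !inE.
Qed.

Lemma reach_notT (T : finType) (E : rel T) B :
  B != set0 -> [set: T] :\: reachB E B [set: T] != [set: T].
Proof.
case/set0Pn => b Hb; apply/eqP => /setP /(_ b); rewrite /reachB !inE /= !andbT.
move/negP; apply; apply/existsP; exists b; by rewrite !inE Hb connect0.
Qed.

Lemma bad_sub n (V1 B : {set 'I_n}) : B != set0 ->
  [set E in digraphs n | (1 < buchi_iterations (edge_rel E) V1 B)%N] \subset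
  \bigcup_(S : {set 'I_n} | (S != set0) && (S != setT)) powerset (Dn n :\: setX S (~: S)).
Proof.
move=> HB; apply/subsetP => E; rewrite inE => /andP [HE Hb].
apply/bigcupP; exists ([set: 'I_n] :\: reachB (edge_rel E) B [set: 'I_n]).
  by rewrite (buchi_gt1 _ _ _ _ Hb) (reach_notT _ _ _ HB).
have HC := reach_closed _ (edge_rel E) B.
move: ([set: 'I_n] :\: _) HC => S HC.
rewrite powersetE; apply/subsetP => -[x y] Hxy; rewrite !inE /=.
apply/andP; split.
  apply/negP => /andP [Hx /negP]; apply; exact: (HC x y Hx).
apply/eqP => e; move: HE; rewrite inE => /forallP /(_ x) /negP; apply.
by rewrite {2}e.
Qed.

Lemma pow_dig n : powerset (Dn n) \subset digraphs n.
Proof.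
apply/subsetP => E; rewrite powersetE inE => HE; apply/forallP => v.
apply/negP => /(subsetP HE); by rewrite inE /= eqxx.
Qed.

Local Open Scope ring_scope.

Theorem theorem3 :
  exists N : nat, forall n : nat, (N <= n)%N ->
    forall V1 B : {set 'I_n}, B != set0 ->
      prob_multi_iter V1 B < (3 / 4 : rat) ^+ n.
Proof.
exists 241%N => n Hn V1 B HB.
have [H1 H2] := asym2 n Hn.
set d := #|Dn n|.
set bad := [set E in digraphs n | (1 < buchi_iterations (edge_rel E) V1 B)%N].
have Hc : (#|bad| * 2 ^ n./2 <= n.+1 * n * 2 ^ d)%N.
  apply: leq_trans (leq_mul (leq_trans (subset_leq_card (bad_sub n V1 B HB))
                                      (card_bigcup_le _ _ _ _)) (leqnn _)) _.
  under eq_bigr => S _ do rewrite card_powF.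
  apply: sum_bound => // k Hk; rewrite /d cardDn; nia.
have Hd : (2 ^ d <= #|digraphs n|)%N.
  by rewrite -card_powerset; apply: subset_leq_card; exact: pow_dig.
have Hnat : (#|bad| * 4 ^ n < 3 ^ n * #|digraphs n|)%N.
  have Hh : (0 < 2 ^ n./2)%N by rewrite expn_gt0.
  rewrite -(ltn_pmul2r Hh).
  set X := #|bad| in Hc *; set Y := #|digraphs n| in Hd *.
  set P := (2 ^ n./2)%N in Hc H1 Hh *; set Q := (2 ^ d)%N in Hc Hd.
  set F := (4 ^ n)%N in H1 *; set G := (3 ^ n)%N in H1 *.
  have L1 : (X * P * F <= n.+1 * n * Q * F)%N by rewrite leq_mul2r Hc orbT.
  have L2 : (n.+1 * n * Q * F < G * P * Q)%N.
    rewrite mulnAC ltn_pmul2r ?expn_gt0 //.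
  have L3 : (G * P * Q <= G * Y * P)%N by rewrite mulnAC leq_mul // leq_mul.
  rewrite mulnAC; exact: leq_ltn_trans L1 (leq_trans L2 L3).
have Hpos : (0 < #|digraphs n|)%N by apply: leq_trans Hd; rewrite expn_gt0.
rewrite /prob_multi_iter -/bad.
rewrite ltr_pdivrMr ?ltr0n // expr_div_n mulrAC ltr_pdivlMr ?exprn_gt0 //.
by rewrite -!natrX -!natrM ltr_nat.
Qed.
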